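(* Fix $\theta,\varphi\in\mathbb{R}$ and $v\in(0,1)$, and for $\varphi_1,\varphi_3\in\mathbb{R}$, $v_2\in[0,1)$ let $$g(\varphi_1,v_2,\varphi_3)=vv_2e^{i(\varphi-\varphi_1+\theta)}+vv_2e^{i(\theta-\varphi+\varphi_3)}+v^2e^{i(\varphi_3-\theta-\varphi_1)}.$$ Then for every $v_2$ with $v\le v_2<1$, the set $\{g(\varphi_1,v_2,\varphi_3):\varphi_1,\varphi_3\in\mathbb{R}\}\subset\mathbb{C}$ is simply connected (it has no holes). *)

(* Defs.v *)
(* The complex plane C is modelled as R * R
   (real part, imaginary part) with the product topology, over an
   arbitrary R : realType. *)
From HB Require Import structures.
From mathcomp Require Import all_boot all_order all_algebra.
From mathcomp Require Import all_classical all_reals all_analysis.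
Set Implicit Arguments. Unset Strict Implicit. Unset Printing Implicit Defensive.
Import Order.TTheory GRing.Theory Num.Theory.
Import numFieldNormedType.Exports.
Local Open Scope classical_set_scope.
Local Open Scope ring_scope.

Definition cplx (R : realType) := (R * R)%type.

Definition cexpi (R : realType) (a : R) : cplx R := (cos a, sin a).

Definition cscale (R : realType) (c : R) (z : cplx R) : cplx R := (c * z.1, c * z.2).

Definition cadd (R : realType) (z w : cplx R) : cplx R := (z.1 + w.1, z.2 + w.2).

Definition gmap (R : realType) (theta phi v : R) (phi1 v2 phi3 : R) : cplx R :=
  cadd (cadd (cscale (v * v2) (cexpi (phi - phi1 + theta)))
             (cscale (v * v2) (cexpi (theta - phi + phi3))))
       (cscale (v ^+ 2) (cexpi (phi3 - theta - phi1))).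

Definition path_connected_set (R : realType) (T : topologicalType) (A : set T) : Prop :=
  A !=set0 /\
  forall x y, A x -> A y ->
    exists gam : R -> T,
      [/\ {within `[0, 1]%classic, continuous gam},
          gam 0 = x, gam 1 = y & gam @` `[0, 1]%classic `<=` A].

Definition loops_contractible (R : realType) (T : topologicalType) (A : set T) : Prop :=
  forall gam : R -> T,
    {within `[0, 1]%classic, continuous gam} -> gam 0 = gam 1 ->
    gam @` `[0, 1]%classic `<=` A ->
    exists H : R * R -> T,
      [/\ {within `[0, 1]%classic `*` `[0, 1]%classic, continuous H},
          (forall s, 0 <= s <= 1 -> H (s, 0) = gam s /\ H (s, 1) = gam 0),
          (forall t, 0 <= t <= 1 -> H (0, t) = gam 0 /\ H (1, t) = gam 0)
        & H @` (`[0, 1]%classic `*` `[0, 1]%classic) `<=` A].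

Definition simply_connected_set (R : realType) (T : topologicalType) (A : set T) : Prop :=
  path_connected_set R A /\ loops_contractible R A.

(* Main.v *)
Require Import Defs.
From HB Require Import structures.
From mathcomp Require Import all_boot all_order all_algebra.
From mathcomp Require Import all_classical all_reals all_analysis.
From mathcomp Require Import ring lra.
Import Order.TTheory GRing.Theory Num.Theory.
Import numFieldNormedType.Exports.
Local Open Scope classical_set_scope.
Local Open Scope ring_scope.
Section S.
Variable R : realType.
Notation sc := (@Defs.cscale R).
Notation ad := (@Defs.cadd R).

Lemma cmin {T : topologicalType} (f g : T -> R) x :
  {for x, continuous f} -> {for x, continuous g} ->
  {for x, continuous (fun y => Num.min (f y) (g y))}.
Proof. move=> cf cg; exact: (@continuous_min R T f g x cf cg). Qed.
Lemma cmax {T : topologicalType} (f g : T -> R) x :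
  {for x, continuous f} -> {for x, continuous g} ->
  {for x, continuous (fun y => Num.max (f y) (g y))}.
Proof. move=> cf cg; exact: (@continuous_max R T f g x cf cg). Qed.
Lemma cplus {T : topologicalType} (f g : T -> R) x :
  {for x, continuous f} -> {for x, continuous g} ->
  {for x, continuous (fun y => f y + g y)}.
Proof. move=> cf cg; exact: cvgD. Qed.
Lemma cmul {T : topologicalType} (f g : T -> R) x :
  {for x, continuous f} -> {for x, continuous g} ->
  {for x, continuous (fun y => f y * g y)}.
Proof. move=> cf cg; exact: cvgM. Qed.
Lemma ccst {T : topologicalType} (c : R) (x : T) :
  {for x, continuous (fun _ : T => c)}.
Proof. exact: cvg_cst. Qed.
Lemma ccstg {T U : topologicalType} (c : U) (x : T) :
  {for x, continuous (fun _ : T => c)}.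
Proof. exact: cvg_cst. Qed.
Lemma cid {T : topologicalType} (x : T) : {for x, continuous (fun s : T => s)}.
Proof. exact: cvg_id. Qed.
Lemma cfst (x : R * R) : {for x, continuous (fun q : R * R => q.1)}.
Proof. exact: cvg_fst. Qed.
Lemma csnd (x : R * R) : {for x, continuous (fun q : R * R => q.2)}.
Proof. exact: cvg_snd. Qed.

Lemma cscale_cont {T : topologicalType} (f : T -> R) (g : T -> cplx R) x :
  {for x, continuous f} -> {for x, continuous g} ->
  {for x, continuous (fun y => sc (f y) (g y))}.
Proof.
move=> cf cg; rewrite /Defs.cscale /continuous_at.
have h1 : (g y).1 @[y --> x] --> (g x).1 by apply: cvg_comp cg _; exact: cvg_fst.
have h2 : (g y).2 @[y --> x] --> (g x).2 by apply: cvg_comp cg _; exact: cvg_snd.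
apply: (@cvg_pair _ _ _ _ (nbhs (f x * (g x).1)) (nbhs (f x * (g x).2))).
  exact: cvgM.
exact: cvgM.
Qed.
Lemma cadd_cont {T : topologicalType} (f g : T -> cplx R) x :
  {for x, continuous f} -> {for x, continuous g} ->
  {for x, continuous (fun y => ad (f y) (g y))}.
Proof.
move=> cf cg; rewrite /Defs.cadd /continuous_at.
have h1 : (f y).1 @[y --> x] --> (f x).1 by apply: cvg_comp cf _; exact: cvg_fst.
have h2 : (f y).2 @[y --> x] --> (f x).2 by apply: cvg_comp cf _; exact: cvg_snd.
have h3 : (g y).1 @[y --> x] --> (g x).1 by apply: cvg_comp cg _; exact: cvg_fst.
have h4 : (g y).2 @[y --> x] --> (g x).2 by apply: cvg_comp cg _; exact: cvg_snd.
apply: (@cvg_pair _ _ _ _ (nbhs ((f x).1 + (g x).1)) (nbhs ((f x).2 + (g x).2))).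
  exact: cvgD.
exact: cvgD.
Qed.

Ltac cnt1 := lazymatch goal with
  | |- continuous_at ?x (fun y => Defs.cadd (@?f y) (@?g y)) => refine (@cadd_cont _ f g x _ _)
  | |- continuous_at ?x (fun y => Defs.cscale (@?f y) (@?g y)) => refine (@cscale_cont _ f g x _ _)
  | |- continuous_at ?x (fun y => @Order.min _ _ (@?f y) (@?g y)) => refine (@cmin _ f g x _ _)
  | |- continuous_at ?x (fun y => @Order.max _ _ (@?f y) (@?g y)) => refine (@cmax _ f g x _ _)
  | |- continuous_at ?x (fun y => @Algebra.add _ (@?f y) (@?g y)) => refine (@cplus _ f g x _ _)
  | |- continuous_at ?x (fun y => @GRing.mul _ (@?f y) (@?g y)) => refine (@cmul _ f g x _ _)
  | |- continuous_at ?x (fun y => fst y) => exact: (cfst x)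
  | |- continuous_at ?x (fun y => snd y) => exact: (csnd x)
  | |- continuous_at ?x (fun y => y) => exact: (@cid _ x)
  | |- continuous_at ?x (fun _ => _) => first [exact: (@ccst _ _ x) | exact: (@ccstg _ _ _ x)]
  | |- _ => progress rewrite /prop_for /inPhantom
  end.
Ltac cnt := repeat cnt1.

Definition clamp (s : R) : R := Num.max 0 (Num.min 1 s).
Lemma clamp01 s : 0 <= clamp s <= 1.
Proof. rewrite /clamp; apply/andP; split; first by rewrite le_max lexx.
by rewrite ge_max ler01 ge_min lexx. Qed.
Lemma clamp_cont : continuous clamp.
Proof. move=> y; rewrite /clamp; cnt. Qed.
Lemma clamp_comp_cont {T : topologicalType} (g : R -> T) :
  {within `[0, 1], continuous g} -> continuous (fun s => g (clamp s)).
Proof.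
move/subspace_continuousP => hg y.
have cl := clamp_cont y.
have A1 : `[0, 1]%classic (clamp y) by rewrite /= in_itv /= clamp01.
rewrite /continuous_at.
apply: (@cvg_trans _ (g @ within `[0, 1]%classic (nbhs (clamp y)))); last exact: hg.
move=> P /= hP. have := cl _ hP. rewrite !nbhs_simpl /=.
by apply: filterS => z; apply; rewrite /= in_itv /= clamp01.
Qed.

Lemma sc1 z : sc 1 z = z.
Proof. by case: z => a b; rewrite /Defs.cscale !mul1r. Qed.
Lemma ad_sc0r z w : ad z (sc 0 w) = z.
Proof. by case: z => a b; rewrite /Defs.cadd /Defs.cscale /= !mul0r !addr0. Qed.
Lemma ad_sc0l z w : ad (sc 0 w) z = z.
Proof. by case: z => a b; rewrite /Defs.cadd /Defs.cscale /= !mul0r !add0r. Qed.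
Lemma ad_scsame a b z : ad (sc a z) (sc b z) = sc (a + b) z.
Proof. by rewrite /Defs.cadd /Defs.cscale /= !mulrDl. Qed.
Lemma clampE s : 0 <= s <= 1 -> clamp s = s.
Proof. move=> /andP[h0 h1]; rewrite /clamp min_r // max_r //. Qed.
Lemma clamp0 s : s <= 0 -> clamp s = 0.
Proof. move=> h; rewrite /clamp max_l // ge_min h orbT //. Qed.
Lemma clamp1 s : 1 <= s -> clamp s = 1.
Proof. move=> h; rewrite /clamp min_l // max_r //. Qed.

Definition star0 (A : set (cplx R)) := forall z c, A z -> 0 <= c <= 1 -> A (sc c z).

Lemma star_path A : A !=set0 -> star0 A -> path_connected_set R A.
Proof.
move=> ne st; split => // x y Ax Ay.
exists (fun s => ad (sc (Num.max 0 (1 + (-2)*s)) x) (sc (Num.max 0 (2*s + (-1))) y)); split.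
- apply: continuous_subspaceT => s.
  cnt.
- rewrite mulr0 addr0 max_r ?ler01 // sc1 max_l; last lra.
  by rewrite ad_sc0r.
- cbv beta; rewrite !mulr1 max_l; last lra. rewrite ad_sc0l max_r; last lra.
  have -> : 2 + (-1) = 1 :> R by lra.
  by rewrite sc1.
- move=> _ [s /= s01 <-]; move: s01; rewrite in_itv /= => /andP[s0 s1].
  have [hs|hs] := lerP s (1/2).
    rewrite [Num.max 0 (2 * s + -1)]max_l; last lra.
    rewrite ad_sc0r; apply: st => //.
    rewrite le_max lexx /= ge_max ler01 /=; lra.
  rewrite [Num.max 0 (1 + -2 * s)]max_l; last lra.
  rewrite ad_sc0l; apply: st => //.
  rewrite le_max lexx /= ge_max ler01 /=; lra.
Qed.

Lemma adE0 a b x z : a = 0 -> b = 1 -> ad (sc a x) (sc b z) = z.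
Proof. by move=> -> ->; rewrite ad_sc0l sc1. Qed.
Lemma adE1 a b x z : a = 1 -> b = 0 -> ad (sc a x) (sc b z) = x.
Proof. by move=> -> ->; rewrite ad_sc0r sc1. Qed.
Lemma adE2 a b x z : z = x -> ad (sc a x) (sc b z) = sc (a + b) x.
Proof. by move=> ->; rewrite ad_scsame. Qed.

Definition tau (t : R) := Num.min (2 * t) 1.
Definition lam (q : R * R) := Num.min (Num.min (3 * q.1) (3 + (-3) * q.1)) (tau q.2).
Definition mu (q : R * R) := Num.min 1 (2 + (-2) * q.2).
Definition sig (q : R * R) := (q.1 + (-1/3) * tau q.2) * (1 + 2 * tau q.2).

Lemma tau_b t : 0 <= t -> 0 <= tau t <= 1.
Proof. move=> h; rewrite /tau; apply/andP; split; last by rewrite ge_min lexx orbT.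
rewrite le_min; apply/andP; split; lra. Qed.
Lemma lam_b s t : 0 <= s <= 1 -> 0 <= t -> 0 <= lam (s, t) <= 1.
Proof.
move=> /andP[s0 s1] t0; have /andP[h0 h1] := @tau_b t t0.
apply/andP; split; last by rewrite /lam /= ge_min h1 orbT.
rewrite /lam /= !le_min; apply/andP; split; [apply/andP; split|]; lra.
Qed.
Lemma mu_b q : q.2 <= 1 -> 0 <= mu q <= 1.
Proof. move=> h; rewrite /mu; apply/andP; split; last by rewrite ge_min lexx.
rewrite le_min ler01 /=; lra. Qed.

Lemma star_loops A : star0 A -> loops_contractible R A.
Proof.
move=> st gam cg g01 sub.
have Ag : forall r, 0 <= r <= 1 -> A (gam r).
  by move=> r hr; apply: sub; exists r => //=; rewrite in_itv /=.
have Agc : forall r, A (gam (clamp r)) by move=> r; apply: Ag; exact: clamp01.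
exists (fun q => ad (sc (1 + (-1) * mu q) (gam 0))
                    (sc (mu q * (1 + (-1) * lam q)) (gam (clamp (sig q))))); split.
- apply: continuous_subspaceT => q.
  rewrite /mu /lam /sig /tau.
  cnt.
  have hs : {for q, continuous (fun y : R * R => (y.1 + -1/3 * Num.min (2*y.2) 1) * (1 + 2 * Num.min (2*y.2) 1))} by cnt.
  have h2 := cvg_comp _ _ hs (@clamp_comp_cont _ gam cg _).
  exact: h2.
- move=> s /andP[s0 s1].
  have t0 : tau 0 = 0 by rewrite /tau mulr0 min_l.
  have t1 : tau 1 = 1 by rewrite /tau mulr1 min_r //; lra.
  split.
    have -> : clamp (sig (s, 0)) = s.
      by rewrite /sig /= t0 mulr0 addr0 mulr0 addr0 mulr1 clampE // s0 s1.
    apply: adE0.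
      rewrite /mu /= mulr0 addr0 min_l; lra.
    rewrite /mu /lam /= t0 mulr0 addr0 min_l; last lra.
    rewrite min_r; first lra.
    rewrite le_min; apply/andP; split; lra.
  apply: adE1.
    rewrite /mu /= mulr1 min_r; lra.
  rewrite /mu /= mulr1 min_r; lra.
- move=> t /andP[t0 t1].
  have /andP[ta tb] := @tau_b t t0.
  have l0 : lam (0, t) = 0.
    rewrite /lam /= !mulr0 addr0 (@min_l _ _ (0:R) (3:R)) //.
    by rewrite min_l.
  have l1 : lam (1, t) = 0.
    rewrite /lam /= !mulr1 (_ : 3 + -3 = 0 :> R); last lra.
    by rewrite (@min_r _ _ (3:R) (0:R)) ?ler0n // min_l.
  split.
    have -> : clamp (sig (0, t)) = 0.
      by apply: clamp0; rewrite /sig /= add0r; apply: mulr_le0_ge0; lra.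
    rewrite ad_scsame l0 (_ : (1 + -1 * mu (0, t) + mu (0, t) * (1 + -1 * 0)) = 1) ?sc1 //.
    lra.
  have -> : clamp (sig (1, t)) = 1.
    apply: clamp1; rewrite /sig /=.
    have hh : 0 <= tau t * (1 - tau t) by apply: mulr_ge0; lra.
    have e : (1 + -1/3 * tau t) * (1 + 2 * tau t) = 1 + tau t + 2/3 * (tau t * (1 - tau t)).
      by field.
    rewrite e; lra.
  rewrite -g01 ad_scsame l1 (_ : (1 + -1 * mu (1, t) + mu (1, t) * (1 + -1 * 0)) = 1) ?sc1 //.
  lra.
- move=> _ [[s t] /= [hs ht] <-].
  move: hs ht; rewrite !in_itv /= => /andP[s0 s1] /andP[t0 t1].
  have /andP[la lb] := @lam_b s t (introT andP (conj s0 s1)) t0.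
  have /andP[ma mb] := @mu_b (s, t) t1.
  have Ax0 : A (gam 0) by apply: Ag; rewrite lexx ler01.
  have p0 : 0 <= mu (s, t) * lam (s, t) by apply: mulr_ge0.
  have p1 : mu (s, t) * lam (s, t) <= 1 by rewrite -[1]mulr1; apply: ler_pM.
  have [ht|ht] := lerP t (1/2).
    have m1 : mu (s, t) = 1 by rewrite /mu min_l //=; lra.
    rewrite m1 (_ : 1 + -1 * 1 = 0 :> R); last lra.
    rewrite ad_sc0l; apply: st => //; lra.
  have tt : tau t = 1 by rewrite /tau min_r //; lra.
  have [hs13|hs13] := lerP s (1/3).
    have -> : clamp (sig (s, t)) = 0 by apply: clamp0; rewrite /sig /= tt; lra.
    rewrite adE2 //; apply: st => //; lra.
  have [hs23|hs23] := lerP (2/3) s.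
    have -> : clamp (sig (s, t)) = 1 by apply: clamp1; rewrite /sig /= tt; lra.
    rewrite -g01 adE2 //; apply: st => //; lra.
  have l1 : lam (s, t) = 1.
    rewrite /lam /= tt min_r //; rewrite le_min; apply/andP; split; lra.
  rewrite l1 (_ : mu (s, t) * (1 + -1 * 1) = 0); last lra.
  rewrite ad_sc0r; apply: st => //; lra.
Qed.

Lemma angle_ex (a b : R) : a^+2 + b^+2 = 1 -> exists t, cos t = a /\ sin t = b.
Proof.
move=> h.
have ab : -1 <= a <= 1.
  apply/andP; split; nra.
have s : Num.sqrt (1 - a^+2) = `|b|.
  by rewrite (_ : 1 - a^+2 = b^+2) ?sqrtr_sqr //; lra.
have ain : a \in `[-1, 1] by rewrite in_itv /=.
have [hb|hb] := lerP 0 b.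
  by exists (acos a); rewrite acosK // sin_acos // s ger0_norm.
by exists (- acos a); rewrite cosN sinN acosK // sin_acos // s ltr0_norm // opprK.
Qed.

Definition Ineq (k V : R) (h : cplx R) :=
  (h.1^+2 + h.2^+2 - k^+2)^+2 <= 4 * V^+2 * ((k + h.1)^+2 + h.2^+2).
Definition P (k V u1 u2 x : R) : cplx R :=
  (2*V*x*u1 + k*(u1^+2 - u2^+2), 2*V*x*u2 + 2*k*u1*u2).
Definition rot (a : R) (p : cplx R) : cplx R :=
  (cos a * p.1 - sin a * p.2, sin a * p.1 + cos a * p.2).

Lemma Ineq_P k V u1 u2 x : u1^+2 + u2^+2 = 1 -> -1 <= x <= 1 ->
  Ineq k V (P k V u1 u2 x).
Proof.
move=> hn /andP[x0 x1]; rewrite /Ineq /P /=.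
have eN : (2*V*x*u1 + k*(u1^+2 - u2^+2))^+2 + (2*V*x*u2 + 2*k*u1*u2)^+2
   = 4*V^+2*x^+2 + 4*V*x*k*u1 + k^+2.
  transitivity (4*V^+2*x^+2*(u1^+2+u2^+2) + 4*V*x*k*u1*(u1^+2+u2^+2)
                + k^+2*(u1^+2+u2^+2)^+2); first by ring.
  by rewrite hn; ring.
have hu2 : u2^+2 = 1 - u1^+2 by lra.
have eM : (k + (2*V*x*u1 + k*(u1^+2 - u2^+2)))^+2 + (2*V*x*u2 + 2*k*u1*u2)^+2
   = 4 * (k*u1 + V*x)^+2.
  transitivity (k^+2 + 2*k*(2*V*x*u1 + k*(u1^+2 - u2^+2)) +
     ((2*V*x*u1 + k*(u1^+2 - u2^+2))^+2 + (2*V*x*u2 + 2*k*u1*u2)^+2)); first by ring.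
  by rewrite eN hu2; ring.
rewrite eN eM.
have -> : (4 * V ^+ 2 * x ^+ 2 + 4 * V * x * k * u1 + k ^+ 2 - k ^+ 2) ^+ 2
   = x^+2 * (4 * V ^+ 2 * (4 * (k * u1 + V * x) ^+ 2)) by ring.
have hx : x^+2 <= 1 by nra.
have hp : 0 <= 4 * V ^+ 2 * (4 * (k * u1 + V * x) ^+ 2).
  by apply: mulr_ge0; [apply: mulr_ge0 => //; exact: sqr_ge0 | apply: mulr_ge0 => //; exact: sqr_ge0].
by rewrite -[X in _ <= X]mul1r; apply: ler_wpM2r.
Qed.

Lemma gmap_rot theta phi v v2 phi1 phi3 b d :
  phi - phi1 + theta = 3*theta + b + d -> theta - phi + phi3 = 3*theta + b - d ->
  gmap theta phi v phi1 v2 phi3 = rot (3*theta) (P (v^+2) (v*v2) (cos b) (sin b) (cos d)).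
Proof.
move=> e1 e2.
have e3 : phi3 - theta - phi1 = 3*theta + (b + b) by lra.
rewrite /gmap /Defs.cadd /Defs.cscale /cexpi e1 e2 e3 /rot /P /=.
rewrite !cosD !sinD ?cosN ?sinN ?cosD ?sinD.
congr pair; ring.
Qed.

Lemma Ineq_inv k V h : 0 < k -> 0 < V -> Ineq k V h ->
  exists u1 u2 x, [/\ u1^+2 + u2^+2 = 1, -1 <= x <= 1 & h = P k V u1 u2 x].
Proof.
case: h => h1 h2; rewrite /Ineq /= => k0 V0 hI.
have M0 : 0 <= (k + h1)^+2 + h2^+2 by apply: addr_ge0; exact: sqr_ge0.
move: M0; rewrite le_eqVlt => /orP[/eqP M0|Mpos].
  have a0 : (k + h1)^+2 = 0.
    apply/eqP; rewrite eq_le sqr_ge0 andbT.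
    have := sqr_ge0 h2; lra.
  have b0 : h2^+2 = 0.
    apply/eqP; rewrite eq_le sqr_ge0 andbT.
    have := sqr_ge0 (k + h1); lra.
  move/eqP: a0; rewrite sqrf_eq0 => /eqP a0.
  move/eqP: b0; rewrite sqrf_eq0 => /eqP b0.
  exists 0, 1, 0; split.
  - by rewrite expr0n /= expr1n add0r.
  - by rewrite lerN10 ler01.
  - rewrite /P b0; congr pair; [rewrite expr0n expr1n /=; lra | ring].
set M := (k + h1)^+2 + h2^+2.
set m := Num.sqrt M.
have m0 : 0 < m by rewrite sqrtr_gt0.
have mM : m^+2 = M by rewrite sqr_sqrtr // ltW.
have mn0 : m != 0 by rewrite gt_eqF.
have Vn0 : V != 0 by rewrite gt_eqF.
have Mn0 : M != 0 by rewrite gt_eqF.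
exists ((k + h1) / m), (h2 / m), ((h1^+2 + h2^+2 - k^+2) / (2 * V * m)); split.
- rewrite !expr_div_n -mulrDl -/M -mM divff //; rewrite expf_eq0 /= mn0 //.
- have e4 : (2 * V * m)^+2 = 4 * V^+2 * M by rewrite -mM; ring.
  have hsq : (h1^+2 + h2^+2 - k^+2)^+2 <= (2 * V * m)^+2 by rewrite e4.
  have p0 : 0 < 2 * V * m by apply: mulr_gt0 => //; apply: mulr_gt0.
  have hb : -(2 * V * m) <= h1^+2 + h2^+2 - k^+2 <= 2 * V * m.
    apply/andP; split; nra.
  case/andP: hb => hb1 hb2.
  rewrite ler_pdivlMr // ler_pdivrMr //.
  by rewrite mulN1r mul1r hb1 hb2.
- rewrite /P; congr pair.
    have -> : 2 * V * ((h1 ^+ 2 + h2 ^+ 2 - k ^+ 2) / (2 * V * m)) * ((k + h1) / m) +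
      k * (((k + h1) / m) ^+ 2 - (h2 / m) ^+ 2) =
      ((h1 ^+ 2 + h2 ^+ 2 - k ^+ 2) * (k + h1) + k * ((k + h1)^+2 - h2^+2)) / m^+2.
      by field; rewrite mn0 Vn0.
    rewrite mM (_ : (h1 ^+ 2 + h2 ^+ 2 - k ^+ 2) * (k + h1) + k * ((k + h1)^+2 - h2^+2) = h1 * M).
      by rewrite mulfK.
    by rewrite /M; ring.
  have -> : 2 * V * ((h1 ^+ 2 + h2 ^+ 2 - k ^+ 2) / (2 * V * m)) * (h2 / m) +
      2 * k * ((k + h1) / m) * (h2 / m) =
      ((h1 ^+ 2 + h2 ^+ 2 - k ^+ 2) * h2 + 2 * k * (k + h1) * h2) / m^+2.
    by field; rewrite mn0 Vn0.
  rewrite mM (_ : (h1 ^+ 2 + h2 ^+ 2 - k ^+ 2) * h2 + 2 * k * (k + h1) * h2 = h2 * M).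
    by rewrite mulfK.
  by rewrite /M; ring.
Qed.

Lemma Ineq_scale k V h c : 0 < k -> k <= V -> 0 <= c <= 1 -> Ineq k V h ->
  Ineq k V (sc c h).
Proof.
case: h => h1 h2 k0 kV /andP[c0 c1]; rewrite /Ineq /Defs.cscale /= => hI.
have N0 : 0 <= h1^+2 + h2^+2 by apply: addr_ge0; exact: sqr_ge0.
set N := h1^+2 + h2^+2 in hI N0.
set r := Num.sqrt N.
have r0 : 0 <= r := sqrtr_ge0 N.
have rN : r^+2 = N := sqr_sqrtr N0.
have hr : -r <= h1 <= r.
  have : h1^+2 <= r^+2 by rewrite rN /N; have := sqr_ge0 h2; lra.
  move=> hh; apply/andP; split; nra.
case/andP: hr => hr1 hr2.
set s := c * r.
have s0 : 0 <= s by apply: mulr_ge0.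
have sr : s <= r by rewrite /s; apply: ler_piMl.
have ch : -s <= c * h1.
  by rewrite /s -mulrN; apply: ler_wpM2l.
have eg1 : (c * h1) ^+ 2 + (c * h2) ^+ 2 = s^+2 by rewrite /s !exprMn rN /N; ring.
have eg2 : (k + c * h1) ^+ 2 + (c * h2) ^+ 2 = k^+2 + 2*k*(c*h1) + s^+2.
  by rewrite -eg1; ring.
have eh : (k + h1)^+2 + h2^+2 = k^+2 + 2*k*h1 + r^+2 by rewrite rN /N; ring.
rewrite eh -rN in hI.
rewrite eg1 eg2.
set w := c * h1 in ch *.
have [sk|ks] := lerP s k.
  have A1 : (s^+2 - k^+2)^+2 = (k - s)^+2 * (k + s)^+2 by ring.
  have A2 : (k + s)^+2 <= 4 * V^+2.
    rewrite (_ : 4 * V^+2 = (2 * V)^+2); last by ring.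
    rewrite ler_pXn2r // ?nnegrE; lra.
  have A3 : (k - s)^+2 <= k^+2 + 2*k*w + s^+2.
    have : 0 <= k * (w + s) by apply: mulr_ge0; lra.
    move=> hh; rewrite (_ : (k - s)^+2 = k^+2 - 2 * k * s + s^+2); last by ring.
    lra.
  rewrite A1.
  apply: (@le_trans _ _ ((k - s)^+2 * (4 * V^+2))).
    by apply: ler_wpM2l => //; exact: sqr_ge0.
  rewrite mulrC; apply: ler_wpM2l => //.
  by apply: mulr_ge0 => //; exact: sqr_ge0.
have rk : k < r by lra.
set D := (r^+2 - k^+2)^+2.
set E := (s^+2 - k^+2)^+2.
set Mr := k^+2 + 2*k*h1 + r^+2 in hI *.
set Mc := k^+2 + 2*k*w + s^+2.
have Fr0 : 0 <= D * (k + s)^+2 - E * (k + r)^+2.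
  rewrite (_ : D * (k + s)^+2 - E * (k + r)^+2 =
     (r + k)^+2 * (s + k)^+2 * ((r - s) * (r + s - 2 * k))); last by rewrite /D /E; ring.
  apply: mulr_ge0; first by apply: mulr_ge0; exact: sqr_ge0.
  apply: mulr_ge0; lra.
have Fm0 : 0 <= D * (k - s)^+2 - E * (k - r)^+2.
  rewrite (_ : D * (k - s)^+2 - E * (k - r)^+2 =
     (r - k)^+2 * (s - k)^+2 * ((r - s) * (r + s + 2 * k))); last by rewrite /D /E; ring.
  apply: mulr_ge0; first by apply: mulr_ge0; exact: sqr_ge0.
  apply: mulr_ge0; lra.
have G0 : 0 <= D * Mc - E * Mr.
  have e : 2 * r * (D * Mc - E * Mr) =
    (r + h1) * (D * (k + s)^+2 - E * (k + r)^+2) + (r - h1) * (D * (k - s)^+2 - E * (k - r)^+2).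
    by rewrite /Mc /Mr /w /s /D /E; ring.
  have : 0 <= 2 * r * (D * Mc - E * Mr).
    rewrite e; apply: addr_ge0; apply: mulr_ge0 => //; lra.
  by rewrite pmulr_rge0 //; apply: mulr_gt0 => //; lra.
have D0 : 0 < D by rewrite /D; apply: exprn_gt0; rewrite subr_gt0 ltr_pXn2r // ?nnegrE; lra.
rewrite -(ler_pM2l D0).
have E0 : 0 <= E by exact: sqr_ge0.
have h1' : D * E <= 4 * V^+2 * Mr * E by apply: ler_wpM2r.
have h2' : 4 * V^+2 * (E * Mr) <= 4 * V^+2 * (D * Mc).
  apply: ler_wpM2l; first by apply: mulr_ge0 => //; exact: sqr_ge0.
  lra.
apply: (le_trans h1'); rewrite (_ : 4 * V ^+ 2 * Mr * E = 4 * V^+2 * (E * Mr)); last by ring.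
apply: (le_trans h2'); rewrite (_ : D * (4 * V ^+ 2 * Mc) = 4 * V ^+ 2 * (D * Mc)) //; ring.
Qed.

Lemma rot_sc a c p : rot a (sc c p) = sc c (rot a p).
Proof. by case: p => p1 p2; rewrite /rot /Defs.cscale /=; congr pair; ring. Qed.

Lemma main_aux (theta phi v v2 : R) : 0 < v < 1 -> v <= v2 < 1 ->
  simply_connected_set R
    [set z : cplx R | exists phi1 phi3 : R, z = gmap theta phi v phi1 v2 phi3].
Proof.
move=> /andP[v0 v1] /andP[vv2 v21].
set G := [set z : cplx R | exists phi1 phi3 : R, z = gmap theta phi v phi1 v2 phi3].
have k0 : 0 < v^+2 by apply: exprn_gt0.
have kV : v^+2 <= v * v2 by rewrite expr2; apply: ler_wpM2l => //; exact: ltW.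
have V0 : 0 < v * v2 by apply: mulr_gt0 => //; lra.
have ne : G !=set0 by exists (gmap theta phi v 0 v2 0); exists 0, 0.
have st : star0 G.
  move=> _ c [p1 [p3 ->]] hc.
  pose X := phi - p1 + theta - 3 * theta.
  pose Y := theta - phi + p3 - 3 * theta.
  have e := @gmap_rot theta phi v v2 p1 p3 ((X + Y) / 2) ((X - Y) / 2).
  rewrite e; last by rewrite /X /Y; field.
    2: by rewrite /X /Y; field.
  have hI := @Ineq_P (v^+2) (v * v2) _ _ _ (cos2Dsin2 ((X + Y) / 2))
     (introT andP (conj (cos_geN1 ((X - Y) / 2)) (cos_le1 ((X - Y) / 2)))).
  have hI2 := @Ineq_scale _ _ _ c k0 kV hc hI.
  have [u1 [u2 [x [hn hx hP]]]] := @Ineq_inv _ _ _ k0 V0 hI2.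
  have [b' [cb sb]] := @angle_ex _ _ hn.
  have xin : x \in `[-1, 1] by rewrite in_itv /=.
  exists (phi + theta - 3 * theta - b' - acos x), (3 * theta + b' - acos x - theta + phi).
  rewrite (@gmap_rot theta phi v v2 _ _ b' (acos x)); [|lra|lra].
  by rewrite cb sb acosK // -hP rot_sc.
split; [exact: star_path | exact: star_loops].
Qed.
End S.

Theorem mainTheorem9 (R : realType) (theta phi v : R) (hv : 0 < v < 1) (v2 : R)
    (hv2 : v <= v2 < 1) :
  simply_connected_set R
    [set z : cplx R | exists phi1 phi3 : R, z = gmap theta phi v phi1 v2 phi3].
Proof. exact: main_aux. Qed.
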